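(* In the reduction instance $NTP([a_j]_{j\in A},W)$, every optimal schedule $S^*$ satisfies $B(S^* )\ge W$.
   Context: Reduction instance. Let $N\ge1$, $A=\{1,\dots,N\}$, positive integers $a_1,\dots,a_N$, positive integer $W\le\sum_{j\in A}a_j$. Set $M=N+\sum_{j\in A}a_j+1$, employees $\mathcal E=\{1,\dots,M\}$ (smaller index = more senior). For $k\in A$: $i_k=k+\sum_{j=1}^{k-1}a_j$ (critical employees), $\mathcal E^S_k=\{i: i_k<i\le i_k+a_k\}$ (stable block). Response delays: $r_{i_k}=\sum_{j=1}^{k}a_j$; for $i\in\mathcal E^S_k$, $r_i=\sum_{j=1}^{k-1}a_j$; $r_M=\sum_{j\in A}a_j$. Let $C^*_0=2\sum_j a_j$ and $H=C^*_0-W$. A schedule $S=(s_i,e_i)_{i\in\mathcal E}$ has $s_i\ge0$, $e_i=s_i+r_i$; it is feasible if $s_1\le\dots\le s_M$ and $e_i\le H$ for all $i$. $b_i=|\{j: i<j,\ e_j<e_i\}|$, $B(S)=\sum_i b_i$. A schedule is optimal if it is feasible and minimizes $B(S)$ among feasible schedules. *)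

(* Defs.v *)
From HB Require Import structures.
From mathcomp Require Import all_boot all_order all_algebra.
From mathcomp Require Import reals.
Set Implicit Arguments. Unset Strict Implicit. Unset Printing Implicit Defensive.
Import Order.TTheory GRing.Theory Num.Theory.

Definition prefA (a : nat -> nat) (k : nat) : nat := \sum_(1 <= j < k.+1) a j.

Definition Memp (a : nat -> nat) (N : nat) : nat := N + prefA a N + 1.

Definition crit (a : nat -> nat) (k : nat) : nat := k + prefA a k.-1.

(* C*_0 = 2 sum_j a_j and H = C*_0 - W (W <= sum_j a_j, so no truncation) *)
Definition C0 (a : nat -> nat) (N : nat) : nat := 2 * prefA a N.
Definition Hor (a : nat -> nat) (N W : nat) : nat := C0 a N - W.

Section Sched.
Variable R : realType.
Local Open Scope ring_scope.

Definition finish (r : nat -> nat) (s : nat -> R) (i : nat) : R := s i + (r i)%:R.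

Definition feasible (M : nat) (H : R) (r : nat -> nat) (s : nat -> R) : Prop :=
  [/\ (forall i, (1 <= i <= M)%N -> 0 <= s i),
      (forall i, (1 <= i < M)%N -> s i <= s i.+1) &
      (forall i, (1 <= i <= M)%N -> finish r s i <= H)].

Definition bcount (M : nat) (r : nat -> nat) (s : nat -> R) (i : nat) : nat :=
  (\sum_(i.+1 <= j < M.+1) (((finish r s j < finish r s i)%R : bool) : nat))%N.

Definition Bval (M : nat) (r : nat -> nat) (s : nat -> R) : nat :=
  (\sum_(1 <= i < M.+1) bcount M r s i)%N.

Definition optimal (M : nat) (H : R) (r : nat -> nat) (s : nat -> R) : Prop :=
  feasible M H r s /\
  (forall s' : nat -> R, feasible M H r s' -> (Bval M r s <= Bval M r s')%N).
End Sched.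

(* Main.v *)
Require Import Defs.
From HB Require Import structures.
From mathcomp Require Import all_boot all_order all_algebra.
From mathcomp Require Import reals.
From mathcomp Require Import lra zify.
Import Order.TTheory GRing.Theory Num.Theory.

Lemma prefA_S a n : prefA a n.+1 = prefA a n + a n.+1.
Proof. by rewrite /prefA big_nat_recr. Qed.

Lemma prefA_mono a m n : m <= n -> prefA a m <= prefA a n.
Proof.
elim: n => [|n IH]; first by rewrite leqn0 => /eqP ->.
rewrite leq_eqVlt => /orP [/eqP -> //|]; rewrite ltnS => /IH h.
rewrite prefA_S; lia.
Qed.

Lemma crit_S a k : crit a k.+2 = crit a k.+1 + a k.+1 + 1.
Proof. rewrite /crit /= prefA_S; lia. Qed.

Lemma crit_mono a m n : m <= n -> crit a m <= crit a n.
Proof.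
move=> h; rewrite /crit; have := @prefA_mono a m.-1 n.-1 ltac:(lia); lia.
Qed.

Lemma sum_sub_range (F : nat -> nat) m n p : m <= n <= p ->
  \sum_(m <= i < n) F i <= \sum_(m <= i < p) F i.
Proof.
move=> /andP [h1 h2]; rewrite [X in _ <= X](@big_cat_nat _ _ _ n) //=.
exact: leq_addr.
Qed.

Theorem corollary4 (R : realType) (N : nat) (a : nat -> nat) (W : nat)
    (r : nat -> nat) :
  (1 <= N)%N ->
  (forall j, (1 <= j <= N)%N -> (0 < a j)%N) ->
  (0 < W)%N -> (W <= prefA a N)%N ->
  (* response delays of critical employees *)
  (forall k, (1 <= k <= N)%N -> r (crit a k) = prefA a k) ->
  (* response delays of the stable blocks E^S_k *)
  (forall k i, (1 <= k <= N)%N -> (crit a k < i <= crit a k + a k)%N ->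
      r i = prefA a k.-1) ->
  r (Memp a N) = prefA a N ->
  forall s : nat -> R,
    optimal (Memp a N) ((Hor a N W)%:R)%R r s ->
    (W <= Bval (Memp a N) r s)%N.
Proof.
move=> N1 apos W0 WA rcrit rstab rM s [[s0 smon sH] _].
set M := Memp a N.
have critN : crit a N.+1 = M by rewrite /crit /M /Memp /=; lia.
have crit1 : crit a 1 = 1 by rewrite /crit /prefA big_geq.
have mono : forall i j, 1 <= i -> i <= j -> j <= M -> (s i <= s j)%R.
  move=> i j hi hij hj; have -> : j = i + (j - i) by lia.
  have : i + (j - i) <= M by lia.
  elim: (j - i) => [|d IH] hd; first by rewrite addn0.
  apply: le_trans (IH ltac:(lia)) _; rewrite addnS; apply: smon; lia.
set f := bcount M r s.
set ind := fun k j => ((finish r s j < finish r s (crit a k))%R : nat).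
set c := fun k => \sum_((crit a k).+1 <= j < (crit a k + a k).+1) ind k j.
have critle : forall k, k <= N -> crit a k.+1 + a k.+1 < crit a k.+2.
  by move=> k _; rewrite crit_S; lia.
have cf : forall k, k < N -> c k.+1 <= f (crit a k.+1).
  move=> k hk; rewrite /c /f /bcount; apply: sum_sub_range.
  have := @crit_mono a k.+2 N.+1 ltac:(lia); rewrite crit_S; lia.
have hB : \sum_(1 <= k < N.+1) c k <= Bval M r s.
  have claim : forall n, n <= N ->
      \sum_(1 <= k < n.+1) c k <= \sum_(1 <= i < crit a n.+1) f i.
    elim => [|n IH] hn; first by rewrite big_geq.
    rewrite big_nat_recr //=.
    have h1 : 1 <= crit a n.+1 by rewrite /crit; lia.
    have h2 : crit a n.+1 <= crit a n.+2 by rewrite crit_S; lia.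
    have h3 : crit a n.+1 < crit a n.+2 by rewrite crit_S; lia.
    rewrite [X in _ <= X](@big_cat_nat _ _ _ (crit a n.+1)) //=.
    rewrite [X in _ <= _ + X](@big_ltn _ _ _ _ _ _ h3).
    have := IH ltac:(lia); have := cf n ltac:(lia); lia.
  apply: leq_trans (claim N (leqnn N)) _; rewrite critN /Bval.
  apply: sum_sub_range; rewrite /M /Memp; lia.
have perk : forall k, 1 <= k < N.+1 ->
    ((a k)%:R <= (c k)%:R + (s (crit a k.+1) - s (crit a k)) :> R)%R.
  case=> [//|k] /andP [_ hk].
  have hcm : crit a k.+2 <= M by rewrite -critN; apply: crit_mono; lia.
  have hc1 : 1 <= crit a k.+1 by rewrite /crit; lia.
  case: (boolP (s (crit a k.+2) - s (crit a k.+1) < (a k.+1)%:R)%R) => hd; last first.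
    rewrite -leNgt in hd.
    have : (0 <= (c k.+1)%:R :> R)%R by apply: ler0n. lra.
  have hxy : (s (crit a k.+1) <= s (crit a k.+2))%R.
    by apply: mono => //; rewrite crit_S; lia.
  suff -> : c k.+1 = a k.+1 by lra.
  rewrite /c (eq_big_nat _ _ (F2 := fun _ => 1)) ?sum_nat_const_nat; first by lia.
  move=> j hj; rewrite /ind /finish.
  rewrite (rstab k.+1 j ltac:(lia) hj) rcrit; last by lia.
  rewrite prefA_S natrD /=.
  have hsj : (s j <= s (crit a k.+2))%R.
    apply: (mono _ _ _ _ hcm); first by lia. rewrite crit_S; lia.
  have -> : (s j + (prefA a k)%:R < s (crit a k.+1) + ((prefA a k)%:R + (a k.+1)%:R))%R = true.
    by apply/idP; lra.
  by [].
have hsum := ler_sum_nat perk.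
rewrite big_split /= telescope_sumr // critN crit1 -natr_sum in hsum.
have hM := sH M ltac:(rewrite /M /Memp; lia).
rewrite /finish rM /Hor /C0 natrB ?natrM in hM; last by lia.
have hs1 := s0 1 ltac:(rewrite /M /Memp; lia).
have hA : \sum_(1 <= k < N.+1) a k = prefA a N by [].
rewrite -natr_sum hA in hsum.
suff : (W%:R <= (\sum_(1 <= k < N.+1) c k)%:R :> R)%R.
  by rewrite ler_nat => h; apply: leq_trans h hB.
have h2 : ((2%N)%:R = 2 :> R)%R by [].
rewrite h2 in hM. lra.
Qed.
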